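(* Let $d$ be a positive integer and let $\{x_1,\dots,x_{2d}\}\subset\mathbb{S}^{d-1}$ be a nearly orthogonal set of $2d$ distinct unit vectors. Then it is a tight frame, i.e. for every $y\in\mathbb{R}^d$, $$\sum_{i=1}^{2d}\langle x_i,y\rangle^2=2\|y\|^2 .$$
   Context: A set of nonzero vectors in $\mathbb{R}^d$ is nearly orthogonal if, among any three distinct vectors of the set, at least two are orthogonal. $\langle\cdot,\cdot\rangle$ is the Euclidean inner product and $\mathbb{S}^{d-1}$ is the unit sphere in $\mathbb{R}^d$. *)

(* Defs.v *)
From mathcomp Require Import all_boot all_order all_algebra.
From mathcomp Require Import reals.
Set Implicit Arguments. Unset Strict Implicit. Unset Printing Implicit Defensive.
Import Order.TTheory GRing.Theory Num.Theory.
Local Open Scope ring_scope.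

Definition dotv (R : pzRingType) (d : nat) (u v : 'rV[R]_d) : R :=
  \sum_(k < d) u 0 k * v 0 k.

Definition sqnorm (R : pzRingType) (d : nat) (u : 'rV[R]_d) : R := dotv u u.

Definition nearly_orthogonal (R : pzRingType) (d : nat) (I : finType)
  (x : I -> 'rV[R]_d) : Prop :=
  forall i j k : I, i != j -> j != k -> i != k ->
    [\/ dotv (x i) (x j) = 0, dotv (x j) (x k) = 0 | dotv (x i) (x k) = 0].

(* Main.v *)
Require Import Defs.
From mathcomp Require Import all_boot all_order all_algebra.
From mathcomp Require Import reals.
From mathcomp Require Import ring lra.
Import Order.TTheory GRing.Theory Num.Theory.
Local Open Scope ring_scope.

Section Aux.
Local Set Implicit Arguments.
Context {R : realType} {d : nat}.
Implicit Types u v w : 'rV[R]_d.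

Lemma dotvC u v : dotv u v = dotv v u.
Proof. by apply: eq_bigr => k _; rewrite mulrC. Qed.

Lemma dotvBl u v w : dotv (u - v) w = dotv u w - dotv v w.
Proof.
rewrite /dotv -sumrB; apply: eq_bigr => k _; rewrite !mxE; ring.
Qed.

Lemma dotvBr u v w : dotv w (u - v) = dotv w u - dotv w v.
Proof. by rewrite dotvC dotvBl !(dotvC w). Qed.

Lemma dotv_suml (I : finType) (f : I -> 'rV[R]_d) (c : I -> R) v :
  dotv (\sum_i c i *: f i) v = \sum_i c i * dotv (f i) v.
Proof.
rewrite /dotv.
under eq_bigr => k _ do rewrite summxE big_distrl /=.
rewrite exchange_big /=; apply: eq_bigr => i _.
rewrite big_distrr /=; apply: eq_bigr => k _; rewrite mxE; ring.
Qed.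

Lemma dotv_sumr (I : finType) (f : I -> 'rV[R]_d) (c : I -> R) v :
  dotv v (\sum_i c i *: f i) = \sum_i c i * dotv v (f i).
Proof.
by rewrite dotvC dotv_suml; apply: eq_bigr => i _; rewrite dotvC.
Qed.

Lemma sqnorm_ge0 u : 0 <= sqnorm u.
Proof. by apply: sumr_ge0 => k _; rewrite -expr2 sqr_ge0. Qed.

End Aux.

Theorem corollary3p2 (R : realType) (d : nat) (hd : (0 < d)%N)
  (x : 'I_(2 * d) -> 'rV[R]_d)
  (xinj : injective x)
  (xunit : forall i, sqnorm (x i) = 1)
  (xno : nearly_orthogonal x) :
  forall y : 'rV[R]_d, \sum_(i < 2 * d) (dotv (x i) y) ^+ 2 = 2 * sqnorm y.
Proof.

have bessel : forall i : 'I_(2 * d), \sum_(j < 2 * d) (dotv (x i) (x j)) ^+ 2 <= 2.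
  move=> i.
  pose c j : R := if j == i then 0 else dotv (x i) (x j).
  pose T := \sum_(j < 2 * d) c j * dotv (x i) (x j).
  have eT : \sum_(j < 2 * d) (dotv (x i) (x j)) ^+ 2 = 1 + T.
    rewrite (bigD1 i) //= [T](bigD1 i) //= /c eqxx mul0r add0r.
    have -> : dotv (x i) (x i) = 1 by exact: xunit.
    rewrite expr1n; congr (_ + _); apply: eq_bigr => j /negPf ->.
    by rewrite expr2.
  have cross : forall j k : 'I_(2 * d), j != k ->
      c j * c k * dotv (x j) (x k) = 0.
    move=> j k jk; rewrite /c.
    case: (eqVneq j i) => [_|ji]; first by rewrite !mul0r.
    case: (eqVneq k i) => [_|ki]; first by rewrite mulr0 mul0r.
    have := xno i j k; rewrite eq_sym ji jk eq_sym ki => /(_ isT isT isT).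
    by case=> ->; rewrite ?mulr0 ?mul0r.
  have diag : forall j : 'I_(2 * d), \sum_(k < 2 * d) c j * c k * dotv (x j) (x k)
      = c j * dotv (x i) (x j).
    move=> j; rewrite (bigD1 j) //= big1 ?addr0; last first.
      by move=> k kj; apply: cross; rewrite eq_sym.
    have -> : dotv (x j) (x j) = 1 by exact: xunit.
    rewrite mulr1 /c; case: (j == i); first by rewrite !mul0r.
    by [].
  have hw := sqnorm_ge0 (x i - \sum_(j < 2 * d) c j *: x j).
  have ew : sqnorm (x i - \sum_(j < 2 * d) c j *: x j) = 1 - T.
    rewrite /sqnorm dotvBl !dotvBr dotv_sumr dotv_suml dotv_suml.
    have -> : dotv (x i) (x i) = 1 by exact: xunit.
    under [X in _ - (X - _)]eq_bigr => j _ do rewrite dotvC.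
    rewrite -/T.
    have -> : \sum_(j < 2 * d) c j * dotv (x j) (\sum_(k < 2 * d) c k *: x k) = T.
      under eq_bigr => j _ do rewrite dotv_sumr mulr_sumr.
      rewrite /T; apply: eq_bigr => j _.
      rewrite -diag; apply: eq_bigr => k _; ring.
    ring.
  rewrite eT; rewrite ew in hw; lra.
pose Sm (k l : 'I_d) : R := \sum_(i < 2 * d) x i 0 k * x i 0 l.
have sq_exp : forall u v : 'rV[R]_d, dotv u v ^+ 2 =
    \sum_(k < d) \sum_(l < d) (u 0 k * v 0 k) * (u 0 l * v 0 l).
  by move=> u v; rewrite expr2 /dotv big_distrlr.
have stepA : \sum_(i < 2 * d) \sum_(j < 2 * d) dotv (x i) (x j) ^+ 2
    <= \sum_(i < 2 * d) 2.
  by apply: ler_sum => i _; apply: bessel.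
have stepB : \sum_(i < 2 * d) \sum_(j < 2 * d) dotv (x i) (x j) ^+ 2
    = \sum_(k < d) \sum_(l < d) Sm k l ^+ 2.
  under eq_bigr => i _ do under eq_bigr => j _ do rewrite sq_exp.
  transitivity (\sum_(k < d) \sum_(l < d) \sum_(i < 2 * d) \sum_(j < 2 * d)
     (x i 0 k * x i 0 l) * (x j 0 k * x j 0 l)); last first.
    by apply: eq_bigr => k _; apply: eq_bigr => l _; rewrite expr2 /Sm big_distrlr.
  under eq_bigr => i _ do rewrite exchange_big /=.
  under eq_bigr => i _ do under eq_bigr => k _ do rewrite exchange_big /=.
  rewrite exchange_big /=.
  under eq_bigr => k _ do rewrite exchange_big /=.
  apply: eq_bigr => k _; apply: eq_bigr => l _; apply: eq_bigr => i _;
    apply: eq_bigr => j _; ring.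
have stepC : \sum_(k < d) Sm k k = \sum_(i < 2 * d) 1.
  rewrite /Sm exchange_big /=; apply: eq_bigr => i _.
  by have := xunit i; rewrite /sqnorm /dotv => <-.
have c1 : \sum_(i < 2 * d) (1:R) = 2 * d%:R.
  rewrite sumr_const card_ord. by rewrite natrM.
have c2 : \sum_(i < 2 * d) (2:R) = 2 * (2 * d%:R).
  by rewrite -c1 mulr_sumr; apply: eq_bigr => i _; rewrite mulr1.
have c3 : \sum_(i < d) (1:R) = d%:R.
  by rewrite sumr_const card_ord.
have delta : forall (k : 'I_d) (f : 'I_d -> R),
    \sum_(l < d) (k == l)%:R * f l = f k.
  move=> k f; rewrite (bigD1 k) //= eqxx mul1r big1 ?addr0 //.
  by move=> l; rewrite eq_sym => /negPf ->; rewrite mul0r.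
have stepD : \sum_(k < d) \sum_(l < d) (Sm k l - 2 * (k == l)%:R) ^+ 2
    = \sum_(k < d) \sum_(l < d) Sm k l ^+ 2
      - 4 * \sum_(k < d) Sm k k + 4 * \sum_(k < d) 1.
  rewrite mulr_sumr [X in _ + X]mulr_sumr -sumrB -big_split /=.
  apply: eq_bigr => k _.
  have e1 := delta k (Sm k).
  have e2 := delta k (fun _ => 1).
  rewrite /= in e2.
  have -> : \sum_(l < d) (Sm k l - 2 * (k == l)%:R) ^+ 2 =
     \sum_(l < d) Sm k l ^+ 2 - 4 * \sum_(l < d) (k == l)%:R * Sm k l
     + 4 * \sum_(l < d) (k == l)%:R * 1.
    rewrite !mulr_sumr -sumrB -big_split /=; apply: eq_bigr => l _.
    by case: (k == l); rewrite /=; ring.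
  by rewrite e1 e2.
have stepE : \sum_(k < d) \sum_(l < d) (Sm k l - 2 * (k == l)%:R) ^+ 2 = 0.
  apply/eqP; rewrite eq_le; apply/andP; split; last first.
    by apply: sumr_ge0 => k _; apply: sumr_ge0 => l _; apply: sqr_ge0.
  rewrite stepD -stepB stepC c1 c3.
  have := stepA; rewrite c2; lra.
have Sd : forall k l, Sm k l = 2 * (k == l)%:R.
  move=> k l; apply/eqP; rewrite -subr_eq0 -sqrf_eq0; apply/eqP.
  have hge : forall k' : 'I_d, true -> 0 <= \sum_(l < d) (Sm k' l - 2 * (k' == l)%:R) ^+ 2.
    by move=> k' _; apply: sumr_ge0 => l' _; apply: sqr_ge0.
  have h1 := psumr_eq0P hge stepE (i:=k) isT.
  have hge2 : forall l' : 'I_d, true -> 0 <= (Sm k l' - 2 * (k == l')%:R) ^+ 2.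
    by move=> l' _; apply: sqr_ge0.
  exact: (psumr_eq0P hge2 h1 (i:=l) isT).
move=> y.
under eq_bigr => i _ do rewrite sq_exp.
rewrite exchange_big /=.
under eq_bigr => k _ do rewrite exchange_big /=.
rewrite /sqnorm /dotv mulr_sumr; apply: eq_bigr => k _.
have e := delta k (fun l => 2 * y 0 k * y 0 l); rewrite /= in e.
rewrite mulrA -e.
apply: eq_bigr => l _.
have := Sd k l; rewrite /Sm => Skl.
transitivity (y 0 k * y 0 l * \sum_(i < 2 * d) x i 0 k * x i 0 l).
  by rewrite mulr_sumr; apply: eq_bigr => i _; ring.
rewrite Skl; ring.
Qed.
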